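(* Every 1-consistent randomized algorithm with advice for online integral metric matching must be at least $\Omega(2^N)$-robust in expectation against an adversary.
   Context: Online integral metric matching: on a metric space a set of $N$ servers is given offline; $N$ requests arrive one at a time, each irrevocably matched upon arrival to a distinct unmatched server at cost equal to their distance; total cost is the sum. The algorithm may use randomness and receives a prediction (advice) of arbitrary form about the request sequence, which may be incorrect. Against an adversary, the requests and their order are chosen by an adversary knowing the algorithm. An algorithm is $1$-consistent if its expected cost equals the optimal offline matching cost whenever the advice is correct; it is $c$-robust in expectation if its expected cost is at most $c$ times the optimal cost for every advice, including incorrect advice. *)

(* Defs.v *)
From HB Require Import structures.
From mathcomp Require Import all_boot all_order all_algebra all_fingroup.
From mathcomp Require Import all_classical all_reals.
From mathcomp Require Import ereal topology normedtype sequences measure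
  lebesgue_measure lebesgue_integral probability.

Set Implicit Arguments.
Unset Strict Implicit.
Unset Printing Implicit Defensive.

Import Order.TTheory GRing.Theory Num.Theory.
Local Open Scope ring_scope.

Definition is_metric (R : realType) (T : Type) (d : T -> T -> R) : Prop :=
  (forall x y, 0 <= d x y) /\
  (forall x y, d x y = 0 <-> x = y) /\
  (forall x y, d x y = d y x) /\
  (forall x y z, d x z <= d x y + d y z).

(* A deterministic online decision rule f maps the prefix of requests seen so
   far (including the current one) to a server index. *)
Definition online_matching (T : Type) (N : nat) (f : seq T -> 'I_N)
  (r : N.-tuple T) : 'I_N -> 'I_N :=
  fun i => f (take i.+1 r).

Definition matching_cost (R : realType) (T : Type) (N : nat)
  (d : T -> T -> R) (s : 'I_N -> T) (r : N.-tuple T) (m : 'I_N -> 'I_N) : R :=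
  \sum_(i < N) d (tnth r i) (s (m i)).

Definition opt_cost (R : realType) (T : Type) (N : nat)
  (d : T -> T -> R) (s : 'I_N -> T) (r : N.-tuple T) : R :=
  \big[Num.min/matching_cost d s r id]_(p : {perm 'I_N})
     matching_cost d s r (fun i => p i).

(* A randomized algorithm with advice: random seed w : Omega, advice a : Adv,
   online rule A w a. Validity: always an (irrevocable) matching to distinct
   servers. *)
Definition valid_alg (T : Type) (N : nat) (Omega Adv : Type)
  (A : Omega -> Adv -> seq T -> 'I_N) : Prop :=
  forall w a (r : N.-tuple T), injective (online_matching (A w a) r).

(* the cost is a random variable (so that its expectation makes sense) *)
Definition measurable_alg (R : realType) (T : Type) (N : nat)
  (d : T -> T -> R) (s : 'I_N -> T) (dm : measure_display)
  (Omega : measurableType dm) (Adv : Type)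
  (A : Omega -> Adv -> seq T -> 'I_N) : Prop :=
  forall a (r : N.-tuple T),
    measurable_fun setT
      (fun w => matching_cost d s r (online_matching (A w a) r)).

Definition exp_cost (R : realType) (T : Type) (N : nat)
  (d : T -> T -> R) (s : 'I_N -> T) (dm : measure_display)
  (Omega : measurableType dm) (P : probability Omega R) (Adv : Type)
  (A : Omega -> Adv -> seq T -> 'I_N) (r : N.-tuple T) (a : Adv) : \bar R :=
  (\int[P]_w (matching_cost d s r (online_matching (A w a) r))%:E)%E.

Definition one_consistent (R : realType) (T : Type) (N : nat)
  (d : T -> T -> R) (s : 'I_N -> T) (dm : measure_display)
  (Omega : measurableType dm) (P : probability Omega R) (Adv : Type)
  (adv : N.-tuple T -> Adv) (A : Omega -> Adv -> seq T -> 'I_N) : Prop :=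
  forall r : N.-tuple T, exp_cost d s P A r (adv r) = (opt_cost d s r)%:E.

Definition robust (R : realType) (T : Type) (N : nat)
  (d : T -> T -> R) (s : 'I_N -> T) (dm : measure_display)
  (Omega : measurableType dm) (P : probability Omega R) (Adv : Type)
  (A : Omega -> Adv -> seq T -> 'I_N) (rho : R) : Prop :=
  forall (r : N.-tuple T) (a : Adv),
    (exp_cost d s P A r a <= (rho * opt_cost d s r)%:E)%E.

(* Main.v *)
Require Import Defs.
From HB Require Import structures.
From mathcomp Require Import all_boot all_order all_algebra all_fingroup.
From mathcomp Require Import all_classical all_reals.
From mathcomp Require Import ereal topology normedtype sequences measure
  lebesgue_measure lebesgue_integral probability.
From mathcomp Require Import measurable_realfun.
From mathcomp Require Import zify ring lra.
Import Order.TTheory GRing.Theory Num.Theory.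
Local Open Scope ring_scope.

Definition dd {R : realType} (e : R) (x y : nat) : R :=
  if x == y then 0 else if (x + y == 1)%N then e else 1.

Lemma dd_ge0 {R : realType} (e : R) x y : 0 < e -> 0 <= dd e x y.
Proof. by move=> e0; rewrite /dd; case: eqP => //; case: eqP => // _ _; exact: ltW. Qed.

Lemma dd_metric (R : realType) (e : R) : 0 < e <= 1 -> is_metric (dd e).
Proof.
move=> /andP[e0 e1]; split; first by move=> x y; exact: dd_ge0.
split.
  move=> x y; rewrite /dd; split; last by move=> ->; rewrite eqxx.
  case: eqP => // _; case: eqP => _ H; [move: e0; rewrite H ltxx // | ].
  by move: H; move/eqP; rewrite oner_eq0.
split.
  by move=> x y; rewrite /dd eq_sym addnC.
move=> x y z.
case: (x =P z) => [->|xz]; first by rewrite {1}/dd eqxx; apply: addr_ge0; exact: dd_ge0.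
rewrite /dd.
case: (x =P y) => [->|xy]; first by rewrite add0r; case: eqP.
case: (y =P z) => [<-|yz]; first by rewrite addr0; case: eqP.
case: (x =P z) => // _.
case: (x + y =P 1)%N => H1; case: (y + z =P 1)%N => H2.
- exfalso; apply: xz; lia.
- case: ifP => _; lra.
- case: ifP => _; lra.
- case: ifP => _; lra.
Qed.

Lemma take1_tuple (m : nat) (t : m.+1.-tuple nat) : take 1 t = [:: tnth t ord0].
Proof. by case: t => [[|x t'] //= H]; rewrite take0 (tnth_nth 0). Qed.

Theorem mainTheorem6 (R : realType) :
  exists c : R, 0 < c /\
  exists N0 : nat, forall N : nat, (N0 <= N)%N ->
  exists (T : Type) (d : T -> T -> R) (s : 'I_N -> T),
    is_metric d /\
    forall (dm : measure_display) (Omega : measurableType dm)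
      (P : probability Omega R) (Adv : Type) (adv : N.-tuple T -> Adv)
      (A : Omega -> Adv -> seq T -> 'I_N) (rho : R),
      valid_alg A ->
      measurable_alg d s A ->
      one_consistent d s P adv A ->
      robust d s P A rho ->
      c * 2 ^+ N <= rho.
Proof.
exists 1; split; first exact: ltr01.
exists 2%N => -[|[|n]] // _.
set e : R := (2 ^+ n.+2)^-1.
have P2 : 0 < 2 ^+ n.+2 :> R by rewrite exprn_gt0.
have eP : e * 2 ^+ n.+2 = 1 by rewrite mulVf // gt_eqF.
have P21 : 1 <= 2 ^+ n.+2 :> R by rewrite exprn_ege1 // ler1n.
have e0 : 0 < e by rewrite invr_gt0.
have e1 : e <= 1 by nra.
pose s := fun i : 'I_n.+2 => (i : nat).+1.
exists nat, (dd e), s; split; first by apply: dd_metric; rewrite e0 e1.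
move=> dm Omega P Adv adv A rho vA mA cA rA.
pose rs := [tuple (if (i : nat) == 0%N then 0%N else if (i:nat) == 1%N then 1%N else (i:nat).+1) | i < n.+2].
pose r := [tuple (if (i : nat) == 0%N then 0%N else (i:nat).+1) | i < n.+2].
pose a := adv rs.
pose X w := matching_cost (dd e) s rs (online_matching (A w a) rs).
pose Y w := matching_cost (dd e) s r (online_matching (A w a) r).
pose o1 : 'I_n.+2 := lift ord0 ord0.
have Hsame : forall w, online_matching (A w a) rs ord0 = online_matching (A w a) r ord0.
  by move=> w; rewrite /online_matching (@take1_tuple _ rs) (@take1_tuple _ r) !tnth_mktuple.
have Xge0 : forall w, 0 <= X w by move=> w; apply: sumr_ge0 => i _; exact: dd_ge0.
have Yge0 : forall w, 0 <= Y w by move=> w; apply: sumr_ge0 => i _; exact: dd_ge0.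
have key : forall w, 1 + e <= X w + e * Y w.
  move=> w; set m := online_matching (A w a) rs.
  have inj := vA w a rs.
  have HX : dd e 0 (s (m ord0)) + dd e 1 (s (m o1)) <= X w.
    rewrite /X /matching_cost 2!big_ord_recl addrA -[X in X <= _]addr0 !tnth_mktuple.
    apply: lerD; first exact: le_refl.
    by apply: sumr_ge0 => i _; exact: dd_ge0.
  have HY : dd e 0 (s (m ord0)) <= Y w.
    rewrite /m Hsame /Y /matching_cost big_ord_recl -[X in X <= _]addr0 !tnth_mktuple.
    apply: lerD; first exact: le_refl.
    by apply: sumr_ge0 => i _; exact: dd_ge0.
  have eY := mulr_ge0 (ltW e0) (Yge0 w).
  case: (m ord0 =P ord0) => [E|E].
  - have H1 : m o1 != ord0 by rewrite -E (inj_eq inj).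
    have H1' : (m o1 : nat) != 0%N by [].
    move: HX; rewrite E /dd /s /= eqSS eq_sym (negbTE H1').
    move=> HX; lra.
  - have H1 : (m ord0 : nat) != 0%N by apply/eqP => H; apply: E; apply: val_inj.
    move: HX HY; rewrite /dd /s /= add0n eqSS (negbTE H1).
    case: ifP => _ HX HY; nra.
have mX : measurable_fun (setT : set Omega) (fun w => (X w)%:E) by apply/measurable_EFinP; exact: mA.
have mY : measurable_fun (setT : set Omega) (fun w => (Y w)%:E) by apply/measurable_EFinP; exact: mA.
have meY : measurable_fun (setT : set Omega) (fun w => (e%:E * (Y w)%:E)%E).
  by apply/measurable_EFinP; apply: measurable_funM => //; exact: mA.
have Hint : ((1 + e)%:E <= \int[P]_w (X w)%:E + e%:E * \int[P]_w (Y w)%:E)%E.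
  rewrite -ge0_integralZl //; last first.
  - by rewrite lee_fin ltW.
  - by move=> w _; rewrite lee_fin.
  rewrite -ge0_integralD //; last first.
  - by move=> w _; rewrite lee_fin mulr_ge0 // ltW.
  - by move=> w _; rewrite lee_fin.
  have -> : ((1 + e)%:E = \int[P]_w (cst (1 + e)%:E w))%E.
    by rewrite integral_cst //= probability_setT mule1.
  apply: ge0_le_integral => //.
  - by move=> w _; rewrite lee_fin addr_ge0 // ltW.
  - by apply: emeasurable_funD.
  - by move=> w _; rewrite /= -EFinM -EFinD lee_fin.
have cX : (\int[P]_w (X w)%:E = (opt_cost (dd e) s rs)%:E)%E := cA rs.
have rY : (\int[P]_w (Y w)%:E <= (rho * opt_cost (dd e) s r)%:E)%E := rA r a.
have ors : opt_cost (dd e) s rs <= 1.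
  apply: le_trans (bigmin_le _ (tperm ord0 o1) _) _.
  rewrite /matching_cost 2!big_ord_recl big1; last first.
    move=> i _; rewrite tpermD; last 2 first.
    - exact: neq_lift.
    - by rewrite (inj_eq (@lift_inj _ ord0)) neq_lift.
    by rewrite tnth_mktuple /dd /s !lift0 /= eqxx.
  rewrite tpermL tpermR !tnth_mktuple /dd /s /=.
  lra.
have orr : opt_cost (dd e) s r <= e.
  apply: le_trans (bigmin_le _ 1%g _) _.
  rewrite /matching_cost big_ord_recl big1; last first.
    by move=> i _; rewrite perm1 tnth_mktuple /dd /s !lift0 /= eqxx.
  rewrite perm1 !tnth_mktuple /dd /s /=.
  lra.
have orr0 : 0 <= opt_cost (dd e) s r.
  apply: le_bigmin; first by apply: sumr_ge0 => i _; exact: dd_ge0.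
  by move=> p _; apply: sumr_ge0 => i _; exact: dd_ge0.
have : ((1 + e)%:E <= (opt_cost (dd e) s rs)%:E + e%:E * (rho * opt_cost (dd e) s r)%:E)%E.
  apply: le_trans Hint _; rewrite cX leeD2l //.
  by apply: lee_wpmul2l => //; rewrite lee_fin ltW.
rewrite -EFinM -EFinD lee_fin => H.
have H2 : 1 <= rho * opt_cost (dd e) s r by nra.
rewrite mul1r.
move: H2 orr orr0 eP P2; set o := opt_cost _ _ _; set p := 2 ^+ n.+2 => H2 orr orr0 eP P2.
have rho0 : 0 < rho.
  rewrite ltNge; apply/negP => Hr.
  have : rho * o <= 0 by rewrite mulr_le0_ge0.
  lra.
have H3 : 1 <= rho * e by apply: le_trans H2 _; rewrite ler_pM2l.
have : p <= rho * e * p by rewrite -[X in X <= _]mul1r ler_pM2r.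
by rewrite -mulrA eP mulr1.
Qed.
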